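(* Let $(X,d)$ be a metric space, let $u,u_1,u_2,\ldots\in F_{USC}(X)$ and let $P$ be a dense subset of $[0,1]$. If $H([u_n]_\alpha,[u]_\alpha)\to0$ for each $\alpha\in P$, then $H_{\rm end}(u_n,u)\to0$.
   Context: A fuzzy set on $X$ is a function $u:X\to[0,1]$, with $\alpha$-cuts $[u]_\alpha=\{x: u(x)\ge\alpha\}$ for $\alpha\in(0,1]$ and $[u]_0=\overline{\{u>0\}}$. $F_{USC}(X)$ is the set of fuzzy sets with all $\alpha$-cuts ($\alpha\in[0,1]$) non-empty and closed. For non-empty closed sets $U,V$ in a metric space $(Y,\rho)$, $H(U,V)=\max\{\sup_{a\in U}\inf_{b\in V}\rho(a,b),\sup_{b\in V}\inf_{a\in U}\rho(a,b)\}$ (Hausdorff distance). $X\times[0,1]$ is metrized by $\overline{d}((x,\alpha),(y,\beta))=d(x,y)+|\alpha-\beta|$, ${\rm end}\,u=\{(x,t)\in X\times[0,1]: u(x)\ge t\}$, and $H_{\rm end}(u,v)=H({\rm end}\,u,{\rm end}\,v)$ computed with $\overline{d}$. *)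

(* Defs.v *)
From HB Require Import structures.
From mathcomp Require Import all_boot all_order all_algebra.
From mathcomp Require Import all_classical all_reals all_analysis.
Set Implicit Arguments. Unset Strict Implicit. Unset Printing Implicit Defensive.
Import Order.TTheory GRing.Theory Num.Theory.
Local Open Scope classical_set_scope.
Local Open Scope ring_scope.

Definition is_metric (R : realType) (T : Type) (d : T -> T -> R) : Prop :=
  (forall x y, 0 <= d x y) /\ (forall x y, d x y = 0 <-> x = y) /\
  (forall x y, d x y = d y x) /\ (forall x y z, d x z <= d x y + d y z).

Definition mclosure (R : realType) (T : Type) (d : T -> T -> R) (A : set T) : set T :=
  [set x | forall e : R, 0 < e -> exists2 y, A y & d x y < e].

Definition mclosed (R : realType) (T : Type) (d : T -> T -> R) (A : set T) : Prop :=
  mclosure d A `<=` A.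

Definition hexcess (R : realType) (T : Type) (d : T -> T -> R) (U V : set T) : \bar R :=
  ereal_sup [set ereal_inf [set (d a b)%:E | b in V] | a in U].

Definition hdist (R : realType) (T : Type) (d : T -> T -> R) (U V : set T) : \bar R :=
  maxe (hexcess d U V) (hexcess d V U).

Definition acut (R : realType) (X : Type) (d : X -> X -> R) (u : X -> R) (a : R) : set X :=
  if a == 0 then mclosure d [set x | 0 < u x] else [set x | a <= u x].

Definition FUSC (R : realType) (X : Type) (d : X -> X -> R) (u : X -> R) : Prop :=
  (forall x, 0 <= u x <= 1) /\
  (forall a : R, 0 <= a <= 1 -> acut d u a !=set0 /\ mclosed d (acut d u a)).

Definition dbar (R : realType) (X : Type) (d : X -> X -> R) (p q : X * R) : R :=
  d p.1 q.1 + `|p.2 - q.2|.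

Definition endo (R : realType) (X : Type) (u : X -> R) : set (X * R) :=
  [set p | 0 <= p.2 <= 1 /\ p.2 <= u p.1].

Definition Hend (R : realType) (X : Type) (d : X -> X -> R) (u v : X -> R) : \bar R :=
  hdist (dbar d) (endo u) (endo v).

Definition dense01 (R : realType) (P : set R) : Prop :=
  (forall p, P p -> 0 <= p <= 1) /\
  (forall x : R, 0 <= x <= 1 -> forall e : R, 0 < e -> exists2 p, P p & `|p - x| < e).

(* Main.v *)
Require Import Defs.
From mathcomp Require Import all_boot all_order all_algebra.
From mathcomp Require Import all_classical all_reals all_analysis.
From mathcomp Require Import lra.
Import Order.TTheory GRing.Theory Num.Theory.
Local Open Scope classical_set_scope.
Local Open Scope ring_scope.


Lemma near_all (Q : nat -> nat -> Prop) N :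
  (forall j, (j < N)%N -> \forall n \near \oo, Q j n) ->
  \forall n \near \oo, forall j, (j < N)%N -> Q j n.
Proof.
elim: N => [|N IH] H; first by apply: nearW => n j.
apply: filterS2 (IH _) (H N (ltnSn N)).
- move=> n H1 H2 j; rewrite ltnS leq_eqVlt => /orP[/eqP->//|]; exact: H1.
- by move=> j jN; apply: H; apply: ltnW.
Qed.

Lemma cvg0_of (R : realType) (f : nat -> \bar R) :
  (forall e : R, 0 < e -> \forall n \near \oo, (0 <= f n)%E /\ (f n <= e%:E)%E) ->
  f @ \oo --> 0%E.
Proof.
move=> H; apply/fine_cvgP; split.
  apply: filterS (H 1 ltr01) => n [h0 h1].
  by rewrite ge0_fin_numE // (le_lt_trans h1) // ltry.
apply/cvgr0Pnorm_lt => e e0.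
have e2 : 0 < e / 2 by rewrite divr_gt0.
apply: filterS (H _ e2) => n /=.
case: (f n) => [r| |] /=; rewrite ?normr0 // ?lee_fin => -[]; rewrite ?lee_fin // => h0 h1.
rewrite ger0_norm //; lra.
Qed.

Lemma get_lt (R : realType) (g : nat -> \bar R) : g @ \oo --> 0%E ->
  forall e : R, 0 < e -> \forall n \near \oo, (g n < e%:E)%E.
Proof.
move/fine_cvgP => [Hf /cvgr0Pnorm_lt He] e e0.
apply: filterS2 Hf (He e e0) => n fn hn.
rewrite -(fineK fn) lte_fin; exact: le_lt_trans (ler_norm _) hn.
Qed.

Lemma excess_pt (R : realType) (T : Type) (d : T -> T -> R) A B e x :
  (hexcess d A B < e%:E)%E -> A x -> exists2 y, B y & d x y < e.
Proof.
move=> H Ax.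
have : (ereal_inf [set (d x b)%:E | b in B] < e%:E)%E.
  by apply: le_lt_trans H; apply: ereal_sup_ubound; exists x.
by move/ereal_inf_lt => [_ [b Bb <-]]; rewrite lte_fin => h; exists b.
Qed.

Lemma hexcess_ge0 (R : realType) (T : Type) (d : T -> T -> R) A B a :
  (forall a b, 0 <= d a b) -> A a -> (0 <= hexcess d A B)%E.
Proof.
move=> d0 Aa; apply: le_ereal_sup_tmp.
exists (ereal_inf [set (d a b)%:E | b in B]); first by exists a.
by apply/ereal_infP => _ [b _ <-]; rewrite lee_fin d0.
Qed.

Lemma key (R : realType) (X : Type) (d : X -> X -> R) (v w : X -> R) (N : nat) (e : R) :
 is_metric d -> (forall x, 0 <= w x) -> (0 < N)%N -> 0 < e ->
 (forall i, (0 < i)%N -> (i < N)%N -> exists q, 0 < q /\ `|q - i%:R / N%:R| < (N%:R)^-1 / 2 /\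
    (forall x, q <= v x -> exists2 y, q <= w y & d x y < e)) ->
 (hexcess (dbar d) (endo v) (endo w) <= (e + 3 * (N%:R)^-1)%:E)%E.
Proof.
move=> [d0 [dxx _]] w0 N0 e0 H.
set h := (N%:R)^-1.
have Nr0 : (0 : R) < N%:R by rewrite ltr0n.
have h0 : 0 < h by rewrite invr_gt0.
have hN : N%:R * h = 1 by rewrite mulfV // gt_eqF.
apply: ge_ereal_sup => _ [[x t] /= [/andP [t0 t1] tv] <-].
apply: ge_ereal_inf; rewrite /= in t0 t1 tv.
have [ht|ht] := ltP t (2 * h).
  exists (dbar d (x,t) (x,0))%:E.
    by exists (x,0) => //; rewrite /endo /= lexx ler01 w0.
  rewrite lee_fin /dbar /= (dxx x x).2 // subr0 ger0_norm //; lra.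
pose Pm := [pred m : nat | (m <= N)%N && (m%:R * h <= t)].
have exP : exists i, Pm i by exists 0%N; rewrite /= mul0r t0.
have ubP : forall i, Pm i -> (i <= N)%N by move=> i /andP[].
case: (ex_maxnP exP ubP) => m /andP[mN mt] mmax.
have tm : t < (m.+1)%:R * h.
  case: (ltnP m N) => mN'.
    rewrite ltNge; apply/negP => ht'.
    by have := mmax m.+1; rewrite /= mN' ht' => /(_ isT); rewrite ltnn.
  have -> : m = N by apply/eqP; rewrite eqn_leq mN mN'.
  rewrite -addn1 natrD mulrDl hN; lra.
have N2 : (2 <= N)%N.
  rewrite -(ler_nat R); rewrite -(ler_pM2r h0) hN; lra.
have m2 : (2 <= m)%N by apply: mmax; rewrite /= N2.
move: m m2 mN mt tm {mmax} => [|[|i]] // _ iN mt tm.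
have [q [q0 [qb qv]]] := H i.+1 isT iN.
move: mt tm qb.
rewrite -[i.+3]addn3 -[i.+2]addn2 -[i.+1]addn1 !natrD !mulrDl -/h => mt tm qb.
have qt : q < t.
  move: qb; rewrite ltr_norml; lra.
have [y wy dy] := qv x (le_trans (ltW qt) tv).
exists (dbar d (x,t) (y,q))%:E.
  exists (y,q) => //; split => //; apply/andP; split; [exact: ltW|rewrite /=; lra].
rewrite lee_fin /dbar /= ger0_norm; last lra.
move: qb; rewrite ltr_norml; lra.
Qed.

Lemma cross (R : realType) (X : Type) (d : X -> X -> R) (v w : X -> R) q e :
  q != 0 -> (hdist d (acut d v q) (acut d w q) < e%:E)%E ->
  (forall x, q <= v x -> exists2 y, q <= w y & d x y < e) /\
  (forall x, q <= w x -> exists2 y, q <= v y & d x y < e).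
Proof.
move=> q0 H; rewrite /hdist in H.
split => x qx.
- have H1 : (hexcess d (acut d v q) (acut d w q) < e%:E)%E.
    by apply: le_lt_trans H; rewrite le_max lexx.
  have := @excess_pt _ _ d _ _ e x H1; rewrite /acut (negbTE q0); apply; exact: qx.
- have H1 : (hexcess d (acut d w q) (acut d v q) < e%:E)%E.
    by apply: le_lt_trans H; rewrite le_max lexx orbT.
  have := @excess_pt _ _ d _ _ e x H1; rewrite /acut (negbTE q0); apply; exact: qx.
Qed.

Theorem theorem4p3 (R : realType) (X : Type) (d : X -> X -> R)
  (u : X -> R) (us : nat -> X -> R) (P : set R) :
  is_metric d -> FUSC d u -> (forall n, FUSC d (us n)) -> dense01 P ->
  (forall a, P a ->
     (fun n => hdist d (acut d (us n) a) (acut d u a)) @ \oo --> 0%E) ->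
  (fun n => Hend d (us n) u) @ \oo --> 0%E.
Proof.
move=> dm [u01 ucut] hus [P01 Pd] Hcv.
have [x0 _] : acut d u 1 !=set0 by case: (ucut 1); rewrite ?lexx ?ler01.
apply: cvg0_of => e e0.
pose N := (Num.Def.archi_bound (6 / e)).+1.
have N0 : (0 < N)%N by [].
have Nr0 : (0 : R) < N%:R by rewrite ltr0n.
pose h : R := (N%:R)^-1.
have h0 : 0 < h by rewrite invr_gt0.
have hN : N%:R * h = 1 by rewrite mulfV // gt_eqF.
have Nb : 6 / e < N%:R.
  have := archi_boundP (ltW (divr_gt0 (ltr0n R 6) e0)).
  rewrite /N -addn1 natrD => ?; lra.
have h3 : e / 2 + 3 * h <= e.
  move: Nb; rewrite ltr_pdivrMr // => Nb.
  have : 6 * h < e by rewrite -(ltr_pM2l Nr0) mulrCA hN mulr1.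
  lra.
have e2 : 0 < e / 2 by rewrite divr_gt0.
have Hi : forall i, (i < N)%N -> \forall n \near \oo, (0 < i)%N ->
   exists q, 0 < q /\ `|q - i%:R / N%:R| < h / 2 /\
     (hdist d (acut d (us n) q) (acut d u q) < (e / 2)%:E)%E.
  move=> [|i] iN; first by apply: nearW.
  have hi : 0 <= i.+1%:R * h <= 1.
    apply/andP; split; first by rewrite mulr_ge0 // ltW.
    rewrite -[X in _ <= X]hN ler_pM2r // ler_nat; exact: ltnW.
  have [q Pq qb] := Pd _ hi (h / 2) (divr_gt0 h0 (ltr0n R 2)).
  apply: filterS (@get_lt _ _ (Hcv q Pq) _ e2) => n hn _.
  exists q; split; last by split.
  move: qb; rewrite ltr_norml; rewrite -[i.+1]addn1 natrD mulrDl mul1r.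
  have : 0 <= i%:R * h by rewrite mulr_ge0 // ltW.
  lra.
have := @near_all (fun i n => (0 < i)%N ->
   exists q, 0 < q /\ `|q - i%:R / N%:R| < h / 2 /\
     (hdist d (acut d (us n) q) (acut d u q) < (e / 2)%:E)%E) N Hi.
apply: filterS => n Hn.
have us0 : forall x, 0 <= us n x by move=> x; have /andP[] := (hus n).1 x.
have u0 : forall x, 0 <= u x by move=> x; have /andP[] := u01 x.
have Hq : forall i, (0 < i)%N -> (i < N)%N -> exists q, 0 < q /\ `|q - i%:R / N%:R| < h / 2 /\
    (forall x, q <= us n x -> exists2 y, q <= u y & d x y < e / 2) /\
    (forall x, q <= u x -> exists2 y, q <= us n y & d x y < e / 2).
  move=> i i0 iN; have [q [q0 [qb hq]]] := Hn i iN i0.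
  by exists q; split => //; split => //; apply: cross => //; rewrite gt_eqF.
have dbar0 : forall a b, 0 <= dbar d a b.
  by move=> a b; rewrite /dbar addr_ge0 // dm.1.
split.
  rewrite /Hend /hdist le_max; apply/orP; left.
  apply: (@hexcess_ge0 _ _ _ _ _ (x0, 0)) => //.
  by rewrite /endo /= lexx ler01 us0.
rewrite /Hend /hdist ge_max; apply/andP; split.
- apply: le_trans (@key _ _ d (us n) u N (e / 2) dm u0 N0 e2 _) _; last by rewrite lee_fin; exact: h3.
  move=> i i0 iN; have [q [q0 [qb [hq _]]]] := Hq i i0 iN.
  by exists q.
- apply: le_trans (@key _ _ d u (us n) N (e / 2) dm us0 N0 e2 _) _; last by rewrite lee_fin; exact: h3.
  move=> i i0 iN; have [q [q0 [qb [_ hq]]]] := Hq i i0 iN.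
  by exists q.
Qed.
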